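(* Let $S=(\mathrm{Id}_n+W_dV_d)\cdots(\mathrm{Id}_n+W_1V_1)Z$ and, for $\eta\in\mathbb C$, $Z_\eta=Z+\eta S$. Then for all $\mu,\eta\in\mathbb C$ and all $k,l\in\mathbb N$, $\{\operatorname{tr}Z_\mu^k,\operatorname{tr}Z_\eta^l\}=0$ on $\mathcal C^\times_{n,d,q}$.
   Context: Fix integers $n\ge1$, $d\ge1$ and $q\in\mathbb C^\times$ not a root of unity. Greek indices range over $\{1,\dots,d\}$; set $o(\alpha,\beta)=0$ if $\alpha=\beta$, $o(\alpha,\beta)=1$ if $\alpha<\beta$, $o(\alpha,\beta)=-1$ if $\alpha>\beta$. Let $\mathcal M^\times_{n,d,q}$ be the affine variety of tuples $(X,Z,V_1,\dots,V_d,W_1,\dots,W_d)$ with $X,Z\in\mathrm{GL}_n(\mathbb C)$, $V_\alpha\in\mathrm{Mat}_{1\times n}(\mathbb C)$, $W_\alpha\in\mathrm{Mat}_{n\times 1}(\mathbb C)$, such that every $\mathrm{Id}_n+W_\alpha V_\alpha$ is invertible and $XZX^{-1}Z^{-1}(\mathrm{Id}_n+W_1V_1)^{-1}\cdots(\mathrm{Id}_n+W_dV_d)^{-1}=q\,\mathrm{Id}_n$. $\mathrm{GL}_n$ acts by $g\cdot(X,Z,V_\alpha,W_\alpha)=(gXg^{-1},gZg^{-1},V_\alpha g^{-1},gW_\alpha)$; the action is free and $\mathcal C^\times_{n,d,q}=\mathcal M^\times_{n,d,q}/\!/\mathrm{GL}_n$ is a smooth affine variety of dimension $2nd$ with $\mathbb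 C[\mathcal C^\times_{n,d,q}]=\mathbb C[\mathcal M^\times_{n,d,q}]^{\mathrm{GL}_n}$. Write $V_{\alpha,j}$, $W_{\alpha,k}$ for the entries. Let $\{-,-\}$ be the antisymmetric biderivation on functions of $(X,Z,V_\alpha,W_\alpha)$ (Van den Bergh's quasi-Poisson bracket) given by $\{X_{ij},X_{kl}\}=\tfrac12(\delta_{il}(X^2)_{kj}-\delta_{kj}(X^2)_{il})$, $\{Z_{ij},Z_{kl}\}=\tfrac12(\delta_{kj}(Z^2)_{il}-\delta_{il}(Z^2)_{kj})$, $\{X_{ij},Z_{kl}\}=\tfrac12((ZX)_{kj}\delta_{il}+\delta_{kj}(XZ)_{il}+Z_{kj}X_{il}-X_{kj}Z_{il})$, $\{U_{ij},W_{\alpha,k}\}=\tfrac12(\delta_{kj}(UW_\alpha)_i-U_{kj}W_{\alpha,i})$, $\{U_{ij},V_{\alpha,l}\}=\tfrac12((V_\alpha U)_j\delta_{il}-V_{\alpha,j}U_{il})$ for $U\in\{X,Z\}$, $\{V_{\alpha,j},V_{\beta,l}\}=\tfrac12 o(\beta,\alpha)(V_{\beta,j}V_{\alpha,l}+V_{\alpha,j}V_{\beta,l})$, $\{W_{\alpha,i},W_{\beta,k}\}=\tfrac12 o(\beta,\alpha)(W_{\beta,k}W_{\alpha,i}+W_{\alpha,k}W_{\beta,i})$, $\{V_{\alpha,j},W_{\beta,k}\}=\delta_{\alpha\beta}(\delta_{kj}+\tfrac12W_{\alpha,k}V_{\alpha,j}+\tfrac12\delta_{kj}V_\alpha W_\alpha)+\tfrac12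 o(\alpha,\beta)(\delta_{kj}V_\alpha W_\beta+W_{\beta,k}V_{\alpha,j})$. Restricted to $\mathrm{GL}_n$-invariant functions this bracket induces a non-degenerate Poisson bracket on $\mathcal C^\times_{n,d,q}$ (quasi-Hamiltonian reduction); this is the Poisson bracket $\{-,-\}$ on $\mathcal C^\times_{n,d,q}$. *)

(* Defs.v *)
From HB Require Import structures.
From mathcomp Require Import all_boot all_order all_algebra.
Set Implicit Arguments. Unset Strict Implicit. Unset Printing Implicit Defensive.
Import Order.TTheory GRing.Theory Num.Theory.
Local Open Scope ring_scope.

(* Coordinates of a tuple (X, Z, V_1..V_d, W_1..W_d):
   inl (inl (i,j)) = X_ij, inl (inr (i,j)) = Z_ij,
   inr (inl (a,j)) = V_{a,j}, inr (inr (a,k)) = W_{a,k}.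
   Greek indices 1..d are encoded as 'I_d (order preserved). *)
Definition coord (n d : nat) : finType :=
  ((('I_n * 'I_n) + ('I_n * 'I_n)) + (('I_d * 'I_n) + ('I_d * 'I_n)))%type.

Section Mats.
Variables (A : comNzRingType) (n d : nat).
Definition Xm (pt : coord n d -> A) : 'M[A]_n := \matrix_(i, j) pt (inl (inl (i, j))).
Definition Zm (pt : coord n d -> A) : 'M[A]_n := \matrix_(i, j) pt (inl (inr (i, j))).
Definition Vm (pt : coord n d -> A) (a : 'I_d) : 'rV[A]_n := \row_j pt (inr (inl (a, j))).
Definition Wm (pt : coord n d -> A) (a : 'I_d) : 'cV[A]_n := \col_k pt (inr (inr (a, k))).

Definition prodWV (V : 'I_d -> 'rV[A]_n) (W : 'I_d -> 'cV[A]_n) : 'M[A]_n :=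
  foldl (fun acc a => (1%:M + W a *m V a) *m acc) 1%:M (enum 'I_d).

Definition Smat (Z : 'M[A]_n) (V : 'I_d -> 'rV[A]_n) (W : 'I_d -> 'cV[A]_n) : 'M[A]_n :=
  prodWV V W *m Z.

Definition mpow (M : 'M[A]_n) (k : nat) : 'M[A]_n := iter k (mulmx M) 1%:M.

Definition trZpow (mu : A) (k : nat) (pt : coord n d -> A) : A :=
  \tr (mpow (Zm pt + mu *: Smat (Zm pt) (Vm pt) (Wm pt)) k).

Definition pt_of (X Z : 'M[A]_n) (V : 'I_d -> 'rV[A]_n) (W : 'I_d -> 'cV[A]_n)
  : coord n d -> A :=
  fun c => match c with
  | inl (inl (i, j)) => X i j
  | inl (inr (i, j)) => Z i j
  | inr (inl (a, j)) => V a 0 j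
  | inr (inr (a, k)) => W a k 0
  end.
End Mats.

Section Bracket.
Variables (R : numClosedFieldType) (n d : nat).

Definition dl (i j : 'I_n) : R := (i == j)%:R.
Definition ord_o (a b : 'I_d) : R := if a == b then 0 else if (a < b)%N then 1 else -1.
Definition half : R := 2^-1.

(* Van den Bergh's quasi-Poisson bracket on coordinate functions,
   evaluated at the point p *)
Definition br (p : coord n d -> R) (c c' : coord n d) : R :=
  let X := Xm p in let Z := Zm p in let V := Vm p in let W := Wm p in
  let bUU (U : 'M[R]_n) i j k l :=
      half * ((Z *m X) k j * dl i l + dl k j * (X *m Z) i l + Z k j * X i l - X k j * Z i l) in
  let bUW (U : 'M[R]_n) i j a k := half * (dl k j * (U *m W a) i 0 - U k j * W a i 0) in
  let bUV (U : 'M[R]_n) i j a l := half * ((V a *m U) 0 j * dl i l - V a 0 j * U i l) in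
  let bVW a j b k := (if a == b then dl k j + half * (W a k 0 * V a 0 j)
                                     + half * (dl k j * (V a *m W a) 0 0) else 0)
                     + half * ord_o a b * (dl k j * (V a *m W b) 0 0 + W b k 0 * V a 0 j) in
  match c, c' with
  | inl (inl (i, j)), inl (inl (k, l)) =>
      half * (dl i l * (X *m X) k j - dl k j * (X *m X) i l)
  | inl (inr (i, j)), inl (inr (k, l)) =>
      half * (dl k j * (Z *m Z) i l - dl i l * (Z *m Z) k j)
  | inl (inl (i, j)), inl (inr (k, l)) => bUU X i j k l
  | inl (inr (k, l)), inl (inl (i, j)) => - bUU X i j k l
  | inl (inl (i, j)), inr (inr (a, k)) => bUW X i j a k
  | inl (inr (i, j)), inr (inr (a, k)) => bUW Z i j a k
  | inr (inr (a, k)), inl (inl (i, j)) => - bUW X i j a k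
  | inr (inr (a, k)), inl (inr (i, j)) => - bUW Z i j a k
  | inl (inl (i, j)), inr (inl (a, l)) => bUV X i j a l
  | inl (inr (i, j)), inr (inl (a, l)) => bUV Z i j a l
  | inr (inl (a, l)), inl (inl (i, j)) => - bUV X i j a l
  | inr (inl (a, l)), inl (inr (i, j)) => - bUV Z i j a l
  | inr (inl (a, j)), inr (inl (b, l)) =>
      half * ord_o b a * (V b 0 j * V a 0 l + V a 0 j * V b 0 l)
  | inr (inr (a, i)), inr (inr (b, k)) =>
      half * ord_o b a * (W b k 0 * W a i 0 + W a k 0 * W b i 0)
  | inr (inl (a, j)), inr (inr (b, k)) => bVW a j b k
  | inr (inr (b, k)), inr (inl (a, j)) => - bVW a j b k
  end.

(* formal partial derivative at p of a polynomial function f (given over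
   any commutative ring, here instantiated at {poly R}):
   coefficient of 'X in f(p + 'X e_c) *)
Definition pdiff (f : (coord n d -> {poly R}) -> {poly R}) (p : coord n d -> R)
  (c : coord n d) : R :=
  (f (fun c' => (p c')%:P + (if c' == c then 'X else 0)))`_1.

Definition PB (f g : (coord n d -> {poly R}) -> {poly R}) (p : coord n d -> R) : R :=
  \sum_(c : coord n d) \sum_(c' : coord n d) pdiff f p c * pdiff g p c' * br p c c'.

Definition prodInv (V : 'I_d -> 'rV[R]_n) (W : 'I_d -> 'cV[R]_n) : 'M[R]_n :=
  foldr (fun a acc => invmx (1%:M + W a *m V a) *m acc) 1%:M (enum 'I_d).

Definition inMx (q : R) (X Z : 'M[R]_n) (V : 'I_d -> 'rV[R]_n) (W : 'I_d -> 'cV[R]_n) : Prop :=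
  [/\ X \in unitmx, Z \in unitmx, (forall a, (1%:M + W a *m V a) \in unitmx)
    & X *m Z *m invmx X *m invmx Z *m prodInv V W = q%:M].
End Bracket.

Definition not_root_of_unity (R : numClosedFieldType) (q : R) : Prop :=
  forall m : nat, (0 < m)%N -> q ^+ m != 1.

(* Main.v *)
Require Import Defs.
From HB Require Import structures.
From mathcomp Require Import all_boot all_order all_algebra.
Import Order.TTheory GRing.Theory Num.Theory.
Local Open Scope ring_scope.
From mathcomp Require Import ring.
Import Defs.
Set Implicit Arguments. Unset Strict Implicit. Unset Printing Implicit Defensive.


Definition Kf (A : comNzRingType) (n d : nat) (pt : coord n d -> A) (a : 'I_d) : 'M[A]_n :=
  1%:M + Wm pt a *m Vm pt a.
Definition Lm (A : comNzRingType) (n d : nat) (pt : coord n d -> A) (s : seq 'I_d) : 'M[A]_n :=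
  foldl (fun acc a => Kf pt a *m acc) 1%:M s.

Section P1.
Variables (R : numClosedFieldType) (n d : nat).

Definition c0 m1 m2 (A : 'M[{poly R}]_(m1,m2)) := map_mx (fun q : {poly R} => q`_0) A.
Definition c1 m1 m2 (A : 'M[{poly R}]_(m1,m2)) := map_mx (fun q : {poly R} => q`_1) A.

Lemma c0D m1 m2 (A B : 'M[{poly R}]_(m1,m2)) : c0 (A + B) = c0 A + c0 B.
Proof. by apply/matrixP => i j; rewrite !mxE coefD. Qed.
Lemma c1D m1 m2 (A B : 'M[{poly R}]_(m1,m2)) : c1 (A + B) = c1 A + c1 B.
Proof. by apply/matrixP => i j; rewrite !mxE coefD. Qed.
Lemma c0Z m1 m2 (a : R) (A : 'M[{poly R}]_(m1,m2)) : c0 (a%:P *: A) = a *: c0 A.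
Proof. by apply/matrixP => i j; rewrite !mxE coefCM. Qed.
Lemma c1Z m1 m2 (a : R) (A : 'M[{poly R}]_(m1,m2)) : c1 (a%:P *: A) = a *: c1 A.
Proof. by apply/matrixP => i j; rewrite !mxE coefCM. Qed.
Lemma c0M m1 m2 m3 (A : 'M[{poly R}]_(m1,m2)) (B : 'M[{poly R}]_(m2,m3)) :
  c0 (A *m B) = c0 A *m c0 B.
Proof.
apply/matrixP => i j; rewrite !mxE coef_sum; apply eq_bigr => k _.
by rewrite coefM big_ord1 !mxE.
Qed.
Lemma c1M m1 m2 m3 (A : 'M[{poly R}]_(m1,m2)) (B : 'M[{poly R}]_(m2,m3)) :
  c1 (A *m B) = c0 A *m c1 B + c1 A *m c0 B.
Proof.
apply/matrixP => i j; rewrite !mxE coef_sum -big_split; apply eq_bigr => k _.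
rewrite coefM big_ord_recr big_ord1 !mxE /=. by rewrite addrC.
Qed.
Lemma c0_1 : c0 (1%:M : 'M[{poly R}]_n) = 1%:M.
Proof. by apply/matrixP => i j; rewrite !mxE coefMn coef1. Qed.
Lemma c1_1 : c1 (1%:M : 'M[{poly R}]_n) = 0.
Proof. by apply/matrixP => i j; rewrite !mxE coefMn coef1 /= mul0rn. Qed.

Definition mpowR (M : 'M[R]_n) k := iter k (mulmx M) 1%:M.

Lemma c0_mpow (M : 'M[{poly R}]_n) k : c0 (mpow M k) = mpow (c0 M) k.
Proof. elim: k => [|k IH] /=; first exact: c0_1. by rewrite c0M IH. Qed.

Lemma mpow_comm (M G : 'M[R]_n) k : G *m M = M *m G -> G *m mpow M k = mpow M k *m G.
Proof.
move=> h; elim: k => [|k IH] /=; first by rewrite mulmx1 mul1mx.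
by rewrite mulmxA h -mulmxA IH mulmxA.
Qed.

Lemma mpowS_r (M : 'M[R]_n) k : mpow M k.+1 = mpow M k *m M.
Proof. by rewrite /= (mpow_comm k (erefl (M *m M))). Qed.

Lemma tr_c1_mpow (M : 'M[{poly R}]_n) k (G : 'M[R]_n) : G *m c0 M = c0 M *m G ->
  \tr (G *m c1 (mpow M k)) = k%:R * \tr (G *m mpow (c0 M) k.-1 *m c1 M).
Proof.
elim: k G => [|k IH] G hG /=; first by rewrite c1_1 mulmx0 mxtrace0 mul0r.
rewrite c1M c0_mpow mulmxDr mxtraceD mulmxA IH; last first.
  by rewrite {1}hG -mulmxA.
have -> : \tr (G *m (c1 M *m mpow (c0 M) k)) = \tr (G *m mpow (c0 M) k *m c1 M).
  by rewrite [in LHS]mulmxA [in LHS]mxtrace_mulC [in LHS]mulmxA -(mpow_comm k hG).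
clear IH; case: k => [|k] /=; first by rewrite mul0r add0r mul1r.
by rewrite -(mulmxA G (c0 M)) [in RHS]mulrSr mulrDl mul1r.
Qed.


Implicit Type p : coord n d -> R.
Definition dZ (c : coord n d) : 'M[R]_n := \matrix_(i,j) ((inl (inr (i,j)) == c)%:R).
Definition dV (a : 'I_d) (c : coord n d) : 'rV[R]_n := \row_j ((inr (inl (a,j)) == c)%:R).
Definition dW (a : 'I_d) (c : coord n d) : 'cV[R]_n := \col_k ((inr (inr (a,k)) == c)%:R).
Definition dK p a c : 'M[R]_n := dW a c *m Vm p a + Wm p a *m dV a c.
Definition stepD p c (acc : 'M[R]_n * 'M[R]_n) a :=
  (Kf p a *m acc.1, dK p a c *m acc.1 + Kf p a *m acc.2).
Definition dL p s c : 'M[R]_n := (foldl (stepD p c) (1%:M, 0) s).2.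

Lemma foldl_stepD1 p c s acc :
  (foldl (stepD p c) acc s).1 = foldl (fun acc a => Kf p a *m acc) acc.1 s.
Proof. by elim: s acc => [|a s IH] acc //=; rewrite IH. Qed.

Lemma Lm_rcons p s a : Lm p (rcons s a) = Kf p a *m Lm p s.
Proof. by rewrite /Lm foldl_rcons. Qed.

Lemma dL_rcons p s a c : dL p (rcons s a) c = dK p a c *m Lm p s + Kf p a *m dL p s c.
Proof. by rewrite /dL foldl_rcons /= foldl_stepD1. Qed.

Lemma dL_nil p c : dL p [::] c = 0. Proof. by []. Qed.
Lemma Lm_nil p : Lm p [::] = 1%:M. Proof. by []. Qed.

Definition ptc p c : coord n d -> {poly R} :=
  fun c' => (p c')%:P + (if c' == c then 'X else 0).

Lemma coef_ptc0 p c c' : (ptc p c c')`_0 = p c'.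
Proof. by rewrite /ptc coefD coefC /=; case: eqP => _; rewrite ?coefX ?coef0 addr0. Qed.
Lemma coef_ptc1 p c c' : (ptc p c c')`_1 = (c' == c)%:R.
Proof. by rewrite /ptc coefD coefC /=; case: eqP => _; rewrite ?coefX ?coef0 add0r. Qed.

Lemma c0Zm p c : c0 (Zm (ptc p c)) = Zm p.
Proof. by apply/matrixP => i j; rewrite !mxE coef_ptc0. Qed.
Lemma c1Zm p c : c1 (Zm (ptc p c)) = dZ c.
Proof. by apply/matrixP => i j; rewrite !mxE coef_ptc1. Qed.
Lemma c0Vm p c a : c0 (Vm (ptc p c) a) = Vm p a.
Proof. by apply/matrixP => i j; rewrite !mxE coef_ptc0. Qed.
Lemma c1Vm p c a : c1 (Vm (ptc p c) a) = dV a c.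
Proof. by apply/matrixP => i j; rewrite !mxE coef_ptc1. Qed.
Lemma c0Wm p c a : c0 (Wm (ptc p c) a) = Wm p a.
Proof. by apply/matrixP => i j; rewrite !mxE coef_ptc0. Qed.
Lemma c1Wm p c a : c1 (Wm (ptc p c) a) = dW a c.
Proof. by apply/matrixP => i j; rewrite !mxE coef_ptc1. Qed.

Lemma c0Kf p c a : c0 (Kf (ptc p c) a) = Kf p a.
Proof. by rewrite /Kf c0D c0_1 c0M c0Vm c0Wm. Qed.
Lemma c1Kf p c a : c1 (Kf (ptc p c) a) = dK p a c.
Proof. by rewrite /Kf c1D c1_1 c1M c0Vm c0Wm c1Vm c1Wm add0r addrC. Qed.

Lemma c_fold p c s (accp : 'M[{poly R}]_n) x y : c0 accp = x -> c1 accp = y ->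
  c0 (foldl (fun acc a => Kf (ptc p c) a *m acc) accp s) = (foldl (stepD p c) (x,y) s).1 /\
  c1 (foldl (fun acc a => Kf (ptc p c) a *m acc) accp s) = (foldl (stepD p c) (x,y) s).2.
Proof.
elim: s accp x y => [|a s IH] accp x y hx hy //=.
apply: IH; first by rewrite c0M c0Kf hx.
by rewrite c1M c0Kf c1Kf hx hy addrC.
Qed.

Lemma c0Lm p c s : c0 (Lm (ptc p c) s) = Lm p s.
Proof. by have [-> _] := c_fold p c s c0_1 c1_1; rewrite foldl_stepD1. Qed.
Lemma c1Lm p c s : c1 (Lm (ptc p c) s) = dL p s c.
Proof. by have [_ ->] := c_fold p c s c0_1 c1_1. Qed.

Definition M0 p (mu : R) : 'M[R]_n := Zm p + mu *: (Lm p (enum 'I_d) *m Zm p).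
Definition dMf p (mu : R) c : 'M[R]_n :=
  dZ c + mu *: (dL p (enum 'I_d) c *m Zm p + Lm p (enum 'I_d) *m dZ c).

Lemma tr_c1 (A : 'M[{poly R}]_n) : \tr (c1 A) = (\tr A)`_1.
Proof. by rewrite /mxtrace coef_sum; apply eq_bigr => i _; rewrite mxE. Qed.

Lemma pdiff_trZpow p (mu : R) k c :
  pdiff (trZpow mu%:P k) p c = k%:R * \tr (mpow (M0 p mu) k.-1 *m dMf p mu c).
Proof.
rewrite /pdiff /trZpow -/(ptc p c) -tr_c1 -[c1 _]mul1mx tr_c1_mpow; last first.
  by rewrite mul1mx mulmx1.
rewrite mul1mx; congr (_ * \tr (mpow _ _ *m _)).
  by rewrite c0D c0Z /Smat c0M c0Zm -[prodWV _ _]/(Lm _ _) c0Lm.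
by rewrite c1D c1Z /Smat c1M c0Zm c1Zm -[prodWV _ _]/(Lm _ _) c0Lm c1Lm /dMf [in X in _ *: X]addrC.
Qed.

Lemma tr_dMf p (mu : R) (A : 'M[R]_n) c :
  \tr (A *m dMf p mu c) = \tr ((A + mu *: (A *m Lm p (enum 'I_d))) *m dZ c)
     + mu * \tr ((Zm p *m A) *m dL p (enum 'I_d) c).
Proof.
rewrite /dMf mulmxDr mulmxDl !mxtraceD -scalemxAr -scalemxAl !mxtraceZ.
rewrite mulmxDr mxtraceD mulrDr !mulmxA.
rewrite (mxtrace_mulC (A *m dL p (enum 'I_d) c)) mulmxA.
rewrite -addrA; congr (_ + _); exact: addrC.
Qed.

End P1.


Section P2.
Variables (R : numClosedFieldType) (n d : nat).
Implicit Type p : coord n d -> R.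

Lemma ord_oC (a b : 'I_d) : ord_o R a b = - ord_o R b a.
Proof.
rewrite /ord_o; case: (ssrnat.ltngtP a b) => h.
- have e1 : (a == b) = false by apply/negbTE; apply/eqP => e; move: h; rewrite e ltnn.
  have e2 : (b == a) = false by rewrite eq_sym.
  by rewrite e1 e2 /= opprK.
- have e1 : (a == b) = false by apply/negbTE; apply/eqP => e; move: h; rewrite e ltnn.
  have e2 : (b == a) = false by rewrite eq_sym.
  by rewrite e1 e2.
- have e : a = b by apply/val_inj.
  by rewrite e eqxx oppr0.
Qed.

Lemma br_antisym p c c' : br p c' c = - br p c c'.
Proof.
case: c => [[[i j]|[i j]]|[[a j]|[a j]]]; case: c' => [[[k l]|[k l]]|[[b m]|[b m]]];
  rewrite /br /=; rewrite ?opprK //; try ring.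
- by rewrite (ord_oC a b); ring.
- by rewrite (ord_oC a b); ring.
Qed.


Definition Bf p (phi psi : coord n d -> R) :=
  \sum_c \sum_c' phi c * psi c' * br p c c'.

Lemma Bf_antisym p phi psi : Bf p psi phi = - Bf p phi psi.
Proof.
rewrite /Bf exchange_big -sumrN; apply eq_bigr => c _; rewrite -sumrN.
by apply eq_bigr => c' _ /=; rewrite (br_antisym p c c'); ring.
Qed.

Lemma Bf_ext p phi phi' psi psi' : (forall c, phi c = phi' c) -> (forall c, psi c = psi' c) ->
  Bf p phi psi = Bf p phi' psi'.
Proof.
by move=> h1 h2; apply eq_bigr => c _; apply eq_bigr => c' _; rewrite h1 h2.
Qed.

Lemma Bf_lin4 p a b x y phi1 phi2 psi1 psi2 :
  Bf p (fun c => a * (phi1 c + x * phi2 c)) (fun c => b * (psi1 c + y * psi2 c)) =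
  a * b * (Bf p phi1 psi1 + y * Bf p phi1 psi2 + x * Bf p phi2 psi1 + x * y * Bf p phi2 psi2).
Proof.
rewrite /Bf [y * _]mulr_sumr [x * (\sum_(i : _) _)]mulr_sumr [x * y * _]mulr_sumr -!big_split mulr_sumr.
apply eq_bigr => c _ /=.
rewrite [y * _]mulr_sumr [x * (\sum_(i : _) _)]mulr_sumr [x * y * _]mulr_sumr -!big_split mulr_sumr.
apply eq_bigr => c' _ /=; ring.
Qed.

Lemma Bf_addl p phi1 phi2 psi :
  Bf p (fun c => phi1 c + phi2 c) psi = Bf p phi1 psi + Bf p phi2 psi.
Proof.
rewrite /Bf -big_split; apply eq_bigr => c _; rewrite -big_split.
by apply eq_bigr => c' _ /=; ring.
Qed.
Lemma Bf_addr p phi psi1 psi2 :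
  Bf p phi (fun c => psi1 c + psi2 c) = Bf p phi psi1 + Bf p phi psi2.
Proof.
rewrite /Bf -big_split; apply eq_bigr => c _; rewrite -big_split.
by apply eq_bigr => c' _ /=; ring.
Qed.

Definition Bm p (d1 d2 : coord n d -> 'M[R]_n) (al be : 'M[R]_n) :=
  Bf p (fun c => \tr (al *m d1 c)) (fun c => \tr (be *m d2 c)).

Lemma Bm_antisym p d1 d2 al be : Bm p d2 d1 be al = - Bm p d1 d2 al be.
Proof. exact: Bf_antisym. Qed.

Definition dLe p c := dL p (enum 'I_d) c.
Definition Pm p := Lm p (enum 'I_d).

Lemma PB_expand p mu eta k l :
  let A := mpow (M0 p mu) k.-1 in let B := mpow (M0 p eta) l.-1 in
  PB (trZpow mu%:P k) (trZpow eta%:P l) p =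
  k%:R * l%:R * (Bm p (@dZ R n d) (@dZ R n d) (A + mu *: (A *m Pm p)) (B + eta *: (B *m Pm p))
    + eta * Bm p (@dZ R n d) (dLe p) (A + mu *: (A *m Pm p)) (Zm p *m B)
    + mu * Bm p (dLe p) (@dZ R n d) (Zm p *m A) (B + eta *: (B *m Pm p))
    + mu * eta * Bm p (dLe p) (dLe p) (Zm p *m A) (Zm p *m B)).
Proof.
move=> A B; rewrite -Bf_lin4; apply: Bf_ext => c.
  by rewrite pdiff_trZpow tr_dMf.
by rewrite pdiff_trZpow tr_dMf.
Qed.

End P2.


Section P3.
Variables (R : numClosedFieldType) (n d : nat).
Implicit Type p : coord n d -> R.

Lemma sum_delta (I : finType) (F : I -> R) i0 : \sum_i F i * (i == i0)%:R = F i0.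
Proof.
rewrite (bigD1 i0) //= eqxx mulr1 big1 ?addr0 // => i /negbTE ->; by rewrite mulr0.
Qed.

Lemma sum2_delta (F : 'I_n -> 'I_n -> R) i j :
  \sum_x \sum_y F x y * ((y == i) && (x == j))%:R = F j i.
Proof.
rewrite (bigD1 j) //= [X in _ + X]big1 ?addr0; last first.
  by move=> x /negbTE hx; rewrite big1 // => y _; rewrite hx andbF mulr0.
under eq_bigr do rewrite eqxx andbT.
exact: sum_delta.
Qed.

Definition gZ (al : 'M[R]_n) (c : coord n d) : R :=
  match c with inl (inr (i, j)) => al j i | _ => 0 end.

Lemma tr_dZ al c : \tr (al *m dZ R c) = gZ al c.
Proof.
rewrite /mxtrace; under eq_bigr do rewrite mxE.
case: c => [[[i j]|[i j]]|[[a j]|[a j]]] /=.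
- by rewrite big1 // => x _; rewrite big1 // => y _; rewrite mxE mulr0.
- by rewrite -(sum2_delta (fun x y => al x y) i j); apply eq_bigr => x _;
    apply eq_bigr => y _; rewrite mxE.
- by rewrite big1 // => x _; rewrite big1 // => y _; rewrite mxE mulr0.
- by rewrite big1 // => x _; rewrite big1 // => y _; rewrite mxE mulr0.
Qed.


Lemma tr_uv (al : 'M[R]_n) (u : 'cV[R]_n) (v : 'rV[R]_n) :
  \tr (al *m (u *m v)) = \sum_y v 0 y * (al *m u) y 0.
Proof. by rewrite mulmxA mxtrace_mulC /mxtrace big_ord1 !mxE. Qed.

Lemma eqVV (a b : 'I_d) (j y : 'I_n) :
  (inr (inl (b, y)) == inr (inl (a, j)) :> coord n d) = (b == a) && (y == j).
Proof. by []. Qed.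
Lemma eqWW (a b : 'I_d) (j y : 'I_n) :
  (inr (inr (b, y)) == inr (inr (a, j)) :> coord n d) = (b == a) && (y == j).
Proof. by []. Qed.

Lemma dV_V (a b : 'I_d) j :
  dV R b (inr (inl (a, j))) = if a == b then (delta_mx 0 j : 'rV[R]_n) else 0.
Proof.
apply/matrixP => i y; rewrite !mxE eqVV eq_sym.
case: (a == b) => /=; rewrite ?mxE //. by case: i => [[|]].
Qed.
Lemma dW_W (a b : 'I_d) j :
  dW R b (inr (inr (a, j))) = if a == b then (delta_mx j 0 : 'cV[R]_n) else 0.
Proof.
apply/matrixP => y i; rewrite !mxE eqWW eq_sym.
case: (a == b) => //=; rewrite mxE //. by case: i => [[|]] // ?; rewrite andbT.
Qed.
Lemma dV_W (a b : 'I_d) (j : 'I_n) : dV R b (inr (inr (a, j))) = 0.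
Proof. by apply/matrixP => i y; rewrite !mxE. Qed.
Lemma dW_V (a b : 'I_d) (j : 'I_n) : dW R b (inr (inl (a, j))) = 0.
Proof. by apply/matrixP => i y; rewrite !mxE. Qed.
Lemma dV_X (b : 'I_d) (x : ('I_n * 'I_n) + ('I_n * 'I_n)) : dV R b (inl x : coord n d) = 0.
Proof. by apply/matrixP => i y; rewrite !mxE. Qed.
Lemma dW_X (b : 'I_d) (x : ('I_n * 'I_n) + ('I_n * 'I_n)) : dW R b (inl x : coord n d) = 0.
Proof. by apply/matrixP => i y; rewrite !mxE. Qed.

Definition gK p (b : 'I_d) (al : 'M[R]_n) (c : coord n d) : R :=
  match c with
  | inr (inl (a, j)) => if a == b then (al *m Wm p b) j 0 else 0
  | inr (inr (a, k)) => if a == b then (Vm p b *m al) 0 k else 0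
  | _ => 0 end.

Lemma tr_dK p b al c : \tr (al *m dK p b c) = gK p b al c.
Proof.
rewrite /dK mulmxDr mxtraceD.
case: c => [x|[[a j]|[a j]]] /=.
- by rewrite dV_X dW_X !mul0mx !mulmx0 mxtrace0 addr0.
- rewrite dW_V mul0mx mulmx0 mxtrace0 add0r dV_V.
  case: (a == b); last by rewrite !mulmx0 mxtrace0.
  by rewrite tr_uv (eq_bigr (fun y => (al *m Wm p b) y 0 * (y == j)%:R))
    ?sum_delta // => y _; rewrite mxE eqxx /= mulrC.
- rewrite dV_W mulmx0 mulmx0 mxtrace0 addr0 dW_W.
  case: (a == b); last by rewrite !mul0mx !mulmx0 mxtrace0.
  rewrite mulmxA mxtrace_mulC mulmxA /mxtrace big_ord1 [LHS]mxE.
  by rewrite (eq_bigr (fun y => (Vm p b *m al) 0 y * (y == j)%:R)) ?sum_delta // => y _;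
    rewrite [delta_mx j 0 y _]mxE eqxx andbT.
Qed.


Lemma Bf_sub p phi psi (P Q : pred (coord n d)) :
  (forall c, ~~ P c -> phi c = 0) -> (forall c, ~~ Q c -> psi c = 0) ->
  Bf p phi psi = \sum_(c | P c) \sum_(c' | Q c') phi c * psi c' * br p c c'.
Proof.
move=> h1 h2; rewrite /Bf (bigID P) /= [X in _ + X]big1 ?addr0; last first.
  by move=> c hc; rewrite big1 // => c' _; rewrite h1 // !mul0r.
apply eq_bigr => c _; rewrite (bigID Q) /= [X in _ + X]big1 ?addr0 //.
by move=> c' hc'; rewrite h2 // mulr0 mul0r.
Qed.

Definition isZ (c : coord n d) : bool := if c is inl (inr _) then true else false.
Definition isK (b : 'I_d) (c : coord n d) : bool :=
  match c with inr (inl (a, _)) => a == b | inr (inr (a, _)) => a == b | _ => false end.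

Lemma sum_pairE (I J : finType) (G : I * J -> R) : \sum_p G p = \sum_i \sum_j G (i, j).
Proof. by rewrite pair_bigA; apply eq_bigr => -[i j] _. Qed.

Lemma sum_if_eq (I : finType) (H : I -> R) b : \sum_a (if a == b then H a else 0) = H b.
Proof. by rewrite -big_mkcond big_pred1_eq. Qed.

Lemma sum_Z (F : coord n d -> R) :
  \sum_(c | isZ c) F c = \sum_i \sum_j F (inl (inr (i, j))).
Proof.
rewrite big_mkcond big_sumType /= !big_sumType /= !big1_eq add0r addr0 sum_pairE.
by rewrite addr0.
Qed.

Lemma sum_K b (F : coord n d -> R) :
  \sum_(c | isK b c) F c = \sum_j F (inr (inl (b, j))) + \sum_k F (inr (inr (b, k))).
Proof.
rewrite big_mkcond big_sumType /= !big_sumType /= !big1_eq !add0r !sum_pairE /=.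
rewrite exchange_big [X in _ + X]exchange_big /=.
by congr (_ + _); apply eq_bigr => j _; rewrite sum_if_eq.
Qed.


Lemma BmZZ p al be : Bm p (@dZ R n d) (@dZ R n d) al be =
  \sum_i \sum_j \sum_k \sum_l al j i * be l k * br p (inl (inr (i, j))) (inl (inr (k, l))).
Proof.
transitivity (Bf p (gZ al) (gZ be)); first by apply: Bf_ext => c; exact: tr_dZ.
rewrite (@Bf_sub p _ _ isZ isZ); try by case => [[?|?]|?].
rewrite sum_Z; apply eq_bigr => i _; apply eq_bigr => j _; rewrite sum_Z //.
Qed.

Lemma lin1 (I : finType) (f g : I -> R) a b :
  a * \sum_i f i + b * \sum_i g i = \sum_i (a * f i + b * g i).
Proof. by rewrite !mulr_sumr -big_split. Qed.

Lemma id_entry (i j : 'I_n) : (1%:M : 'M[R]_n) i j = dl R i j.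
Proof. by rewrite mxE. Qed.

Lemma G1 (al be a b : 'M[R]_n) :
  \sum_i \sum_j \sum_k \sum_l al j i * be l k * (a k j * b i l) = \tr (al *m b *m be *m a).
Proof.
rewrite exchange_big /mxtrace; apply eq_bigr => j _; rewrite mxE.
rewrite exchange_big; apply eq_bigr => k _; rewrite mxE mulr_suml.
rewrite exchange_big; apply eq_bigr => l _; rewrite mxE !mulr_suml.
by apply eq_bigr => i _; ring.
Qed.

Lemma B1 p al be : Bm p (@dZ R n d) (@dZ R n d) al be =
  half R * (\tr (al *m (Zm p *m Zm p) *m be) - \tr (al *m be *m (Zm p *m Zm p))).
Proof.
rewrite BmZZ /br /=.
set Z2 := Zm p *m Zm p.
have e1 : al *m Z2 *m be = al *m Z2 *m be *m 1%:M by rewrite mulmx1.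
have e2 : al *m be *m Z2 = al *m 1%:M *m be *m Z2 by rewrite mulmx1.
rewrite e1 e2 -!G1 mulrBr -mulNr !lin1.
apply eq_bigr => i _; rewrite ?lin1; apply eq_bigr => j _; rewrite ?lin1.
apply eq_bigr => k _; rewrite ?lin1; apply eq_bigr => l _.
rewrite !id_entry; ring.
Qed.


Lemma G3 (al : 'M[R]_n) (r : 'rV[R]_n) (s : 'M[R]_n) (x : 'cV[R]_n) :
  \sum_i \sum_j \sum_l al j i * x l 0 * (r 0 j * s i l) = (r *m al *m s *m x) 0 0.
Proof.
under eq_bigr do rewrite exchange_big.
rewrite exchange_big mxE; apply eq_bigr => l _; rewrite mxE mulr_suml.
apply eq_bigr => i _; rewrite mxE !mulr_suml; apply eq_bigr => j _; ring.
Qed.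

Lemma G4 (al : 'M[R]_n) (y : 'rV[R]_n) (t : 'M[R]_n) (u : 'cV[R]_n) :
  \sum_i \sum_j \sum_k al j i * y 0 k * (t k j * u i 0) = (y *m t *m al *m u) 0 0.
Proof.
rewrite mxE; apply eq_bigr => i _; rewrite mxE mulr_suml.
apply eq_bigr => j _; rewrite mxE !mulr_suml; apply eq_bigr => k _; ring.
Qed.

Lemma B2raw p b al be :
  let V := Vm p b in let W := Wm p b in let Z := Zm p in
  Bm p (@dZ R n d) (dK p b) al be =
  half R * ((V *m Z *m al *m 1%:M *m (be *m W)) 0 0 - (V *m al *m Z *m (be *m W)) 0 0)
  + half R * ((V *m be *m 1%:M *m al *m (Z *m W)) 0 0 - (V *m be *m Z *m al *m W) 0 0).
Proof.
move=> V W Z.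
transitivity (Bf p (gZ al) (gK p b be)); first by apply: Bf_ext => c; [exact: tr_dZ|exact: tr_dK].
rewrite (@Bf_sub p _ _ isZ (isK b)); first last.
- by case => [[?|?]|[[??]|[??]]] //= /negbTE ->.
- by case => [[?|?]|?].
rewrite sum_Z; under eq_bigr do under eq_bigr do rewrite sum_K.
rewrite /br /= !eqxx; under eq_bigr do rewrite big_split; rewrite big_split /=.
rewrite -(G3 al (V *m Z) 1%:M (be *m W)) -(G3 al V Z (be *m W)).
rewrite -(G4 al (V *m be) 1%:M (Z *m W)) -(G4 al (V *m be) Z W).
rewrite !mulrBr -!mulNr !lin1.
congr (_ + _); apply eq_bigr => i _; rewrite ?lin1; apply eq_bigr => j _; rewrite ?lin1;
  apply eq_bigr => l _; rewrite !id_entry; ring.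
Qed.


Lemma lin2 (I : finType) (f g : I -> R) b :
  \sum_i f i + b * \sum_i g i = \sum_i (f i + b * g i).
Proof. by rewrite mulr_sumr -big_split. Qed.

Lemma H1 (x x' : 'cV[R]_n) (r s : 'rV[R]_n) :
  \sum_j \sum_l x j 0 * x' l 0 * (r 0 j * s 0 l) = (r *m x) 0 0 * (s *m x') 0 0.
Proof.
rewrite !mxE mulr_suml; apply eq_bigr => j _; rewrite mulr_sumr.
by apply eq_bigr => l _; ring.
Qed.
Lemma H2 (y y' : 'rV[R]_n) (u v : 'cV[R]_n) :
  \sum_i \sum_k y 0 i * y' 0 k * (u k 0 * v i 0) = (y' *m u) 0 0 * (y *m v) 0 0.
Proof.
rewrite !mxE mulr_suml exchange_big; apply eq_bigr => k _; rewrite mulr_sumr.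
by apply eq_bigr => i _; ring.
Qed.
Lemma H3 (x : 'cV[R]_n) (y' : 'rV[R]_n) :
  \sum_j \sum_k x j 0 * y' 0 k * dl R k j = (y' *m x) 0 0.
Proof.
rewrite mxE; apply eq_bigr => j _.
rewrite (eq_bigr (fun k => (x j 0 * y' 0 k) * (k == j)%:R)) ?sum_delta; first by ring.
by [].
Qed.
Lemma H4 (x : 'cV[R]_n) (y' : 'rV[R]_n) (u : 'cV[R]_n) (v : 'rV[R]_n) :
  \sum_j \sum_k x j 0 * y' 0 k * (u k 0 * v 0 j) = (y' *m u) 0 0 * (v *m x) 0 0.
Proof.
rewrite !mxE mulr_sumr; apply eq_bigr => j _; rewrite mulr_suml.
by apply eq_bigr => k _; ring.
Qed.
Lemma H5 (y : 'rV[R]_n) (x' : 'cV[R]_n) :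
  \sum_k \sum_j y 0 k * x' j 0 * dl R k j = (y *m x') 0 0.
Proof.
rewrite mxE; apply eq_bigr => k _.
rewrite (eq_bigr (fun j => (y 0 k * x' j 0) * (j == k)%:R)) ?sum_delta; first by ring.
by move=> j _; rewrite /dl eq_sym.
Qed.
Lemma H6 (y : 'rV[R]_n) (x' : 'cV[R]_n) (u : 'cV[R]_n) (v : 'rV[R]_n) :
  \sum_k \sum_j y 0 k * x' j 0 * (u k 0 * v 0 j) = (y *m u) 0 0 * (v *m x') 0 0.
Proof.
rewrite !mxE mulr_suml; apply eq_bigr => k _; rewrite mulr_sumr.
by apply eq_bigr => j _; ring.
Qed.

Lemma Bm_KK p a b al be :
  Bm p (dK p a) (dK p b) al be =
  \sum_(c | isK a c) \sum_(c' | isK b c') gK p a al c * gK p b be c' * br p c c'.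
Proof.
transitivity (Bf p (gK p a al) (gK p b be)); first by apply: Bf_ext => c; exact: tr_dK.
by rewrite (@Bf_sub p _ _ (isK a) (isK b)) //; case => [[?|?]|[[??]|[??]]] //= /negbTE ->.
Qed.

Lemma B4raw p a b al be : (a == b) = false ->
  let Va := Vm p a in let Wa := Wm p a in let Vb := Vm p b in let Wb := Wm p b in
  let x := al *m Wa in let y := Va *m al in let x' := be *m Wb in let y' := Vb *m be in
  Bm p (dK p a) (dK p b) al be =
  ((half R * ord_o R b a) * ((Vb *m x) 0 0 * (Va *m x') 0 0)
   + (half R * ord_o R b a) * ((Va *m x) 0 0 * (Vb *m x') 0 0)
  + ((half R * ord_o R a b * (Va *m Wb) 0 0) * (y' *m x) 0 0
   + (half R * ord_o R a b) * ((y' *m Wb) 0 0 * (Va *m x) 0 0)))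
  + ((- (half R * ord_o R b a * (Vb *m Wa) 0 0)) * (y *m x') 0 0
   + (- (half R * ord_o R b a)) * ((y *m Wa) 0 0 * (Vb *m x') 0 0)
  + ((half R * ord_o R b a) * ((y' *m Wb) 0 0 * (y *m Wa) 0 0)
   + (half R * ord_o R b a) * ((y' *m Wa) 0 0 * (y *m Wb) 0 0))).
Proof.
move=> hab Va Wa Vb Wb x y x' y'.
have hba : (b == a) = false by rewrite eq_sym.
rewrite Bm_KK sum_K; under eq_bigr do rewrite sum_K; under [X in _ + X]eq_bigr do rewrite sum_K.
rewrite /br /= !eqxx hab hba !big_split /=.
congr ((_ + _) + (_ + _)).
- rewrite -(H1 x x' Vb Va) -(H1 x x' Va Vb) !lin1; apply eq_bigr => j _; rewrite !lin1.
  by apply eq_bigr => l _; ring.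
- rewrite -(H3 x y') -(H4 x y' Wb Va) !lin1; apply eq_bigr => j _; rewrite !lin1.
  by apply eq_bigr => l _; ring.
- rewrite -(H5 y x') -(H6 y x' Wa Vb) !lin1; apply eq_bigr => j _; rewrite !lin1.
  by apply eq_bigr => l _; ring.
- rewrite -(H2 y y' Wb Wa) -(H2 y y' Wa Wb) !lin1; apply eq_bigr => j _; rewrite !lin1.
  by apply eq_bigr => l _; ring.
Qed.


Lemma B3raw p a al be :
  let Va := Vm p a in let Wa := Wm p a in
  let x := al *m Wa in let y := Va *m al in let x' := be *m Wa in let y' := Va *m be in
  let o := ord_o R a a in let c := (Va *m Wa) 0 0 in
  Bm p (dK p a) (dK p a) al be =
  ((half R * o) * ((Va *m x) 0 0 * (Va *m x') 0 0)
   + (half R * o) * ((Va *m x) 0 0 * (Va *m x') 0 0)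
  + ((1 + half R * c + half R * o * c) * (y' *m x) 0 0
   + (half R + half R * o) * ((y' *m Wa) 0 0 * (Va *m x) 0 0)))
  + ((- (1 + half R * c + half R * o * c)) * (y *m x') 0 0
   + (- (half R + half R * o)) * ((y *m Wa) 0 0 * (Va *m x') 0 0)
  + ((half R * o) * ((y' *m Wa) 0 0 * (y *m Wa) 0 0)
   + (half R * o) * ((y' *m Wa) 0 0 * (y *m Wa) 0 0))).
Proof.
move=> Va Wa x y x' y' o c.
rewrite Bm_KK sum_K; under eq_bigr do rewrite sum_K; under [X in _ + X]eq_bigr do rewrite sum_K.
rewrite /br /= !eqxx !big_split /=.
congr ((_ + _) + (_ + _)).
- rewrite -(H1 x x' Va Va) !lin1; apply eq_bigr => j _; rewrite !lin1.
  by apply eq_bigr => l _; rewrite /o; ring.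
- rewrite -(H3 x y') -(H4 x y' Wa Va) !lin1; apply eq_bigr => j _; rewrite !lin1.
  by apply eq_bigr => l _; rewrite /o /c; ring.
- rewrite -(H5 y x') -(H6 y x' Wa Va) !lin1; apply eq_bigr => j _; rewrite !lin1.
  by apply eq_bigr => l _; rewrite /o /c; ring.
- rewrite -(H2 y y' Wa Wa) !lin1; apply eq_bigr => j _; rewrite !lin1.
  by apply eq_bigr => l _; rewrite /o; ring.
Qed.

End P3.

Section P4.
Variables (R : numClosedFieldType) (n d : nat).
Implicit Type p : coord n d -> R.

Lemma tr11 (A : 'M[R]_1) : \tr A = A 0 0.
Proof. by rewrite /mxtrace big_ord1. Qed.

Lemma tr_rank1 (A : 'M[R]_n) (u : 'cV[R]_n) (v : 'rV[R]_n) :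
  \tr (A *m (u *m v)) = (v *m A *m u) 0 0.
Proof. by rewrite mulmxA mxtrace_mulC tr11 mulmxA. Qed.

Lemma tr_rank2 (A B : 'M[R]_n) (u1 u2 : 'cV[R]_n) (v1 v2 : 'rV[R]_n) :
  \tr (A *m (u1 *m v1) *m B *m (u2 *m v2)) = (v1 *m B *m u2) 0 0 * (v2 *m A *m u1) 0 0.
Proof.
have -> : A *m (u1 *m v1) *m B *m (u2 *m v2) = (A *m u1) *m (v1 *m B *m u2) *m v2.
  by rewrite !mulmxA.
rewrite {1}(mx11_scalar (v1 *m B *m u2)) mul_mx_scalar -scalemxAl mxtraceZ.
by rewrite mxtrace_mulC tr11 mulmxA.
Qed.

Lemma mxEB m1 m2 (A B : 'M[R]_(m1, m2)) i j : (A - B) i j = A i j - B i j.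
Proof. by rewrite !mxE. Qed.

Lemma comm_K (be : 'M[R]_n) (w : 'cV[R]_n) (v : 'rV[R]_n) :
  be *m (1%:M + w *m v) - (1%:M + w *m v) *m be = be *m (w *m v) - (w *m v) *m be.
Proof. by rewrite mulmxDr mulmxDl mulmx1 mul1mx opprD addrACA subrr add0r. Qed.

Lemma trX_comm_K (X be : 'M[R]_n) (w : 'cV[R]_n) (v : 'rV[R]_n) :
  \tr (X *m (be *m (1%:M + w *m v) - (1%:M + w *m v) *m be)) =
  (v *m X *m be *m w) 0 0 - (v *m be *m X *m w) 0 0.
Proof.
rewrite comm_K mulmxBr mxtraceD linearN /= mulmxA tr_rank1.
by rewrite (mulmxA X) mxtrace_mulC (mulmxA be) tr_rank1 !mulmxA.
Qed.

Lemma B2 p b al be :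
  Bm p (@dZ R n d) (dK p b) al be =
  - half R * \tr ((al *m Zm p - Zm p *m al) *m (be *m Kf p b - Kf p b *m be)).
Proof.
rewrite B2raw /Kf -mulmxA trX_comm_K !mulmxBr !mulmxBl !mxEB !mulmx1 !mulmxA.
rewrite !mulmx1. ring.
Qed.


Lemma ord_o_refl (a : 'I_d) : ord_o R a a = 0.
Proof. by rewrite /ord_o eqxx. Qed.

Lemma KK_eq (w : 'cV[R]_n) (v : 'rV[R]_n) :
  (1%:M + w *m v) *m (1%:M + w *m v) = 1%:M + (2%:R + (v *m w) 0 0) *: (w *m v).
Proof.
have h : w *m v *m (w *m v) = (v *m w) 0 0 *: (w *m v).
  by rewrite mulmxA -(mulmxA w) {1}(mx11_scalar (v *m w)) mul_mx_scalar -scalemxAl.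
rewrite mulmxDl !mulmxDr !mulmx1 !mul1mx h scalerDl scaler_nat mulr2n !addrA.
by [].
Qed.

Lemma B3 p a al be :
  Bm p (dK p a) (dK p a) al be =
  half R * (\tr (al *m (Kf p a *m Kf p a) *m be) - \tr (al *m be *m (Kf p a *m Kf p a))).
Proof.
rewrite B3raw /= ord_o_refl /Kf KK_eq mulmxDr mulmx1 mulmxDl !mulmxDr !mulmx1 !mxtraceD.
rewrite -!scalemxAr -!scalemxAl !mxtraceZ.
rewrite tr_rank1 (mxtrace_mulC (al *m (Wm p a *m Vm p a)) be) (mulmxA be) tr_rank1 !mulmxA.
by rewrite /half; field.
Qed.


Lemma R2 (A B : 'M[R]_n) (u1 u2 : 'cV[R]_n) (v1 v2 : 'rV[R]_n) :
  \tr (A *m u1 *m v1 *m B *m u2 *m v2) = (v1 *m B *m u2) 0 0 * (v2 *m A *m u1) 0 0.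
Proof. by rewrite -tr_rank2 !mulmxA. Qed.

Lemma R2' (A : 'M[R]_n) (u1 u2 : 'cV[R]_n) (v1 v2 : 'rV[R]_n) :
  \tr (A *m u1 *m v1 *m u2 *m v2) = (v1 *m u2) 0 0 * (v2 *m A *m u1) 0 0.
Proof.
have -> : v1 *m u2 = v1 *m 1%:M *m u2 by rewrite mulmx1.
by rewrite -tr_rank2 mulmx1 !mulmxA.
Qed.

Lemma trC4 (al be : 'M[R]_n) (w w' : 'cV[R]_n) (v v' : 'rV[R]_n) :
  \tr ((al *m (1%:M + w *m v) - (1%:M + w *m v) *m al) *m
       (be *m (1%:M + w' *m v') - (1%:M + w' *m v') *m be)) =
  (v *m be *m w') 0 0 * (v' *m al *m w) 0 0 - (v *m w') 0 0 * (v' *m be *m al *m w) 0 0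
  - (v' *m w) 0 0 * (v *m al *m be *m w') 0 0 + (v' *m be *m w) 0 0 * (v *m al *m w') 0 0.
Proof.
rewrite !comm_K mulmxBl !mulmxBr !mxtraceD !linearN /=.
have t1 : \tr (al *m (w *m v) *m (be *m (w' *m v'))) =
    (v *m be *m w') 0 0 * (v' *m al *m w) 0 0 by rewrite !mulmxA R2.
have t2 : \tr (al *m (w *m v) *m (w' *m v' *m be)) =
    (v *m w') 0 0 * (v' *m be *m al *m w) 0 0.
  by rewrite !mulmxA mxtrace_mulC !mulmxA R2' !mulmxA.
have t3 : \tr (w *m v *m al *m (be *m (w' *m v'))) =
    (v' *m w) 0 0 * (v *m al *m be *m w') 0 0.
  by rewrite mxtrace_mulC !mulmxA mxtrace_mulC !mulmxA R2' !mulmxA.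
have t4 : \tr (w *m v *m al *m (w' *m v' *m be)) =
    (v' *m be *m w) 0 0 * (v *m al *m w') 0 0.
  by rewrite mxtrace_mulC !mulmxA mxtrace_mulC !mulmxA R2.
rewrite t1 t2 mxtraceD linearN /= t3 t4; ring.
Qed.

Lemma B4 p (a b : 'I_d) al be : (b < a)%N ->
  Bm p (dK p a) (dK p b) al be =
  half R * \tr ((al *m Kf p a - Kf p a *m al) *m (be *m Kf p b - Kf p b *m be)).
Proof.
move=> hba.
have hab : (a == b) = false.
  by apply/negbTE; apply/eqP => e; move: hba; rewrite e ltnn.
have hba' : (b == a) = false by rewrite eq_sym.
have o1 : ord_o R b a = 1 by rewrite /ord_o hba' hba.
have o2 : ord_o R a b = -1 by rewrite /ord_o hab ltnNge (ltnW hba).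
rewrite B4raw //= o1 o2 /Kf trC4 !mulmxA.
ring.
Qed.

End P4.


Ltac leftmost t := lazymatch t with | (?x *m _)%R => leftmost x | _ => t end.
Ltac rot_to a := repeat match goal with |- context [\tr (?X *m ?Y)] =>
  let h := leftmost X in tryif constr_eq h a then fail else
  (rewrite (mxtrace_mulC X Y) ?mulmxA) end.

Section P5.
Variables (R : numClosedFieldType) (n d : nat).
Implicit Type p : coord n d -> R.

Lemma tr_dprod (al dk K L dl : 'M[R]_n) :
  \tr (al *m (dk *m L + K *m dl)) = \tr ((L *m al) *m dk) + \tr ((al *m K) *m dl).
Proof.
rewrite mulmxDr mxtraceD (mulmxA al dk) mxtrace_mulC (mulmxA L).
by rewrite (mulmxA al K).
Qed.

Lemma Bm_rcons_r p d1 s a al be :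
  Bm p d1 (dL p (rcons s a)) al be =
  Bm p d1 (dK p a) al (Lm p s *m be) + Bm p d1 (dL p s) al (be *m Kf p a).
Proof. rewrite /Bm -Bf_addr; apply: Bf_ext => c //; by rewrite dL_rcons tr_dprod. Qed.

Lemma Bm_rcons_l p d2 s a al be :
  Bm p (dL p (rcons s a)) d2 al be =
  Bm p (dK p a) d2 (Lm p s *m al) be + Bm p (dL p s) d2 (al *m Kf p a) be.
Proof. rewrite /Bm -Bf_addl; apply: Bf_ext => c //; by rewrite dL_rcons tr_dprod. Qed.

Lemma Bm_nil_r p d1 al be : Bm p d1 (dL p [::]) al be = 0.
Proof.
rewrite /Bm /Bf big1 // => c _; rewrite big1 // => c' _.
by rewrite dL_nil mulmx0 mxtrace0 mulr0 mul0r.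
Qed.

Lemma com_step (be K L : 'M[R]_n) :
  (L *m be) *m K - K *m (L *m be) + ((be *m K) *m L - L *m (be *m K)) =
  be *m (K *m L) - (K *m L) *m be.
Proof. by rewrite !mulmxA addrC addrA subrK. Qed.

Lemma L1 p (a : 'I_d) s al be : all (fun x : 'I_d => (x < a)%N) s ->
  Bm p (dK p a) (dL p s) al be =
  half R * \tr ((al *m Kf p a - Kf p a *m al) *m (be *m Lm p s - Lm p s *m be)).
Proof.
elim/last_ind: s al be => [|s b IH] al be.
  by rewrite Bm_nil_r Lm_nil mulmx1 mul1mx subrr mulmx0 mxtrace0 mulr0.
rewrite all_rcons => /andP [hb hs].
rewrite Bm_rcons_r B4 // IH // -mulrDr -mxtraceD -mulmxDr Lm_rcons com_step.
by [].
Qed.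

Lemma L2 p s al be :
  Bm p (@dZ R n d) (dL p s) al be =
  - half R * \tr ((al *m Zm p - Zm p *m al) *m (be *m Lm p s - Lm p s *m be)).
Proof.
elim/last_ind: s al be => [|s b IH] al be.
  by rewrite Bm_nil_r Lm_nil mulmx1 mul1mx subrr mulmx0 mxtrace0 mulr0.
rewrite Bm_rcons_r B2 IH -mulrDr -mxtraceD -mulmxDr Lm_rcons com_step.
by [].
Qed.


Lemma fusion_alg (K L al be : 'M[R]_n) :
  half R * (\tr ((L *m al) *m (K *m K) *m (L *m be)) - \tr ((L *m al) *m (L *m be) *m (K *m K)))
  + half R * \tr (((L *m al) *m K - K *m (L *m al)) *m ((be *m K) *m L - L *m (be *m K)))
  + - (half R * \tr (((L *m be) *m K - K *m (L *m be)) *m ((al *m K) *m L - L *m (al *m K))))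
  + half R * (\tr ((al *m K) *m (L *m L) *m (be *m K)) - \tr ((al *m K) *m (be *m K) *m (L *m L)))
  = half R * (\tr (al *m ((K *m L) *m (K *m L)) *m be) - \tr (al *m be *m ((K *m L) *m (K *m L)))).
Proof.
rewrite !mulmxBl !mulmxBr !raddfB /= !mulmxA.
rot_to al.
ring.
Qed.


Lemma L3 p s al be : pairwise (fun x y : 'I_d => (x < y)%N) s ->
  Bm p (dL p s) (dL p s) al be =
  half R * (\tr (al *m (Lm p s *m Lm p s) *m be) - \tr (al *m be *m (Lm p s *m Lm p s))).
Proof.
elim/last_ind: s al be => [|s a IH] al be.
  by rewrite Bm_nil_r Lm_nil !mulmx1 subrr mulr0.
rewrite pairwise_rcons => /andP [ha hs].
rewrite Bm_rcons_l !Bm_rcons_r B3 L1 // IH //.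
rewrite (Bm_antisym p (dK p a) (dL p s) (Lm p s *m be) (al *m Kf p a)) L1 //.
by rewrite Lm_rcons -fusion_alg !addrA.
Qed.

End P5.


  Ltac expand_tr := repeat progress rewrite ?mulmxDl ?mulmxDr ?mulmxBl ?mulmxBr
  ?mulmx1 ?mul1mx -?scalemxAl -?scalemxAr ?mulmxN ?mulNmx ?mxtraceD ?raddfB ?raddfN
  ?mxtraceZ ?mulmxA /=.

Section P6.
Variables (R : numClosedFieldType) (n : nat).
Implicit Types (A B Z Q Rr M N P : 'M[R]_n).

Definition T2QR A B Z Q Rr :=
  \tr (A *m Q *m (Z *m Z) *m (B *m Rr)) - \tr (A *m Q *m (B *m Rr) *m (Z *m Z))
  - \tr ((A *m Q *m Z - Z *m (A *m Q)) *m (Z *m B *m Rr - Rr *m (Z *m B)))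
  + \tr ((B *m Rr *m Z - Z *m (B *m Rr)) *m (Z *m A *m Q - Q *m (Z *m A)))
  + \tr (Z *m A *m ((Q - 1%:M) *m (Rr - 1%:M)) *m (Z *m B))
  - \tr (Z *m A *m (Z *m B) *m ((Q - 1%:M) *m (Rr - 1%:M))).

Definition Sx A B Z M N :=
  \tr (A *m M *m Z *m B) - \tr (A *m M *m B *m Z) + \tr (A *m Z *m B *m N)
  - \tr (A *m B *m N *m Z).

Lemma stepC A B Z Q Rr : Q *m Rr = Rr *m Q ->
  A *m Q *m Z = Q *m Z *m A -> B *m Rr *m Z = Rr *m Z *m B ->
  T2QR A B Z Q Rr = Sx A B Z (Q *m Z) (Rr *m Z).
Proof.
move=> hQR hA hB.
have hRQ : forall X : 'M[R]_n, X *m Rr *m Q = X *m Q *m Rr by move=> X; rewrite -!mulmxA hQR.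
rewrite /T2QR /Sx; expand_tr.
rot_to A; rewrite hA ?mulmxA; rot_to A.
rot_to B; rewrite hB ?mulmxA; rot_to A.
rewrite !hRQ.
ring.
Qed.


Lemma stepDfin A B Z M N (mu nu : R) : A *m M = M *m A -> B *m N = N *m B ->
  (nu - mu) *: Z = nu *: M - mu *: N -> mu != nu -> Sx A B Z M N = 0.
Proof.
move=> hA hB hZ hne.
have e : (nu - mu) * Sx A B Z M N = Sx A B ((nu - mu) *: Z) M N.
  by rewrite /Sx; expand_tr; ring.
have : (nu - mu) * Sx A B Z M N = 0.
  rewrite e hZ /Sx; expand_tr.
  do 2 (repeat (rot_to A; rewrite hA ?mulmxA); repeat (rot_to B; rewrite hB ?mulmxA)).
  rot_to A; ring.
by move/eqP; rewrite mulf_eq0 subr_eq0 eq_sym (negbTE hne) /= => /eqP.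
Qed.

Lemma stepD_eq A B Z M : A *m M = M *m A -> B *m M = M *m B -> A *m B = B *m A ->
  Sx A B Z M M = 0.
Proof.
move=> hA hB hAB.
have sAB : forall X : 'M[R]_n, X *m B *m A = X *m A *m B by move=> X; rewrite -!mulmxA hAB.
have sAM : forall X : 'M[R]_n, X *m M *m A = X *m A *m M by move=> X; rewrite -!mulmxA hA.
have sBM : forall X : 'M[R]_n, X *m M *m B = X *m B *m M by move=> X; rewrite -!mulmxA hB.
rewrite /Sx; rot_to Z.
rewrite ?sAB ?sAM ?sBM ?sAB ?sAM ?sBM ?sAB.
ring.
Qed.


End P6.


Section P7.
Variables (R : numClosedFieldType) (n : nat).
Implicit Types (A B Z Q Rr M N P : 'M[R]_n).

Lemma comm1 (nu : R) P (Y : 'M[R]_n) :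
  Y *m (1%:M + nu *: P) - (1%:M + nu *: P) *m Y = nu *: (Y *m P - P *m Y).
Proof.
rewrite mulmxDr mulmxDl mulmx1 mul1mx -scalemxAr -scalemxAl scalerBr.
by rewrite opprD addrACA subrr add0r.
Qed.

Lemma QR1 (mu nu : R) P :
  (1%:M + mu *: P - 1%:M) *m (1%:M + nu *: P - 1%:M) = (mu * nu) *: (P *m P).
Proof. by rewrite [1%:M + mu *: P]addrC addrK [1%:M + nu *: P]addrC addrK -scalemxAl -scalemxAr scalerA. Qed.

Lemma conv A B Z P (mu nu : R) :
  let x := A + mu *: (A *m P) in let y := B + nu *: (B *m P) in
  half R * (\tr (x *m (Z *m Z) *m y) - \tr (x *m y *m (Z *m Z)))
  + nu * (- half R * \tr ((x *m Z - Z *m x) *m (Z *m B *m P - P *m (Z *m B))))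
  + mu * - (- half R * \tr ((y *m Z - Z *m y) *m (Z *m A *m P - P *m (Z *m A))))
  + mu * nu * (half R * (\tr (Z *m A *m (P *m P) *m (Z *m B)) - \tr (Z *m A *m (Z *m B) *m (P *m P))))
  = half R * T2QR A B Z (1%:M + mu *: P) (1%:M + nu *: P).
Proof.
move=> x y.
have ex : x = A *m (1%:M + mu *: P) by rewrite /x mulmxDr mulmx1 scalemxAr.
have ey : y = B *m (1%:M + nu *: P) by rewrite /y mulmxDr mulmx1 scalemxAr.
rewrite /T2QR -ex -ey.
rewrite comm1 comm1 QR1.
rewrite -!scalemxAr -!scalemxAl !mxtraceZ.
ring.
Qed.

End P7.

Section P8.
Variables (R : numClosedFieldType) (n d : nat).

Lemma commQR (mu nu : R) (P : 'M[R]_n) :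
  (1%:M + mu *: P) *m (1%:M + nu *: P) = (1%:M + nu *: P) *m (1%:M + mu *: P).
Proof.
rewrite !mulmxDl !mulmxDr !mul1mx !mulmx1 -!scalemxAl -!scalemxAr !scalerA (mulrC nu mu).
by rewrite !addrA; congr (_ + _); rewrite addrAC.
Qed.

Lemma pairwise_enum : pairwise (fun x y : 'I_d => (x < y)%N) (enum 'I_d).
Proof.
have := iota_ltn_sorted 0 d.
by rewrite -val_enum_ord (sorted_pairwise ltn_trans) pairwise_map.
Qed.

Lemma main_gen (p : coord n d -> R) (mu eta : R) (k l : nat) :
  PB (trZpow mu%:P k) (trZpow eta%:P l) p = 0.
Proof.
move: (PB_expand p mu eta k l) => /= ->.
set A := mpow (M0 p mu) k.-1.
set B := mpow (M0 p eta) l.-1.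
rewrite /Pm.
change (dLe p) with (dL p (enum 'I_d)).
rewrite B1 L2.
rewrite (Bm_antisym p (@dZ R n d) (dL p (enum 'I_d))
  (B + eta *: (B *m Lm p (enum 'I_d))) (Zm p *m A)) L2 L3 ?pairwise_enum //.
rewrite conv.
set P := Lm p (enum 'I_d).
set Z := Zm p.
have hM0 : forall m, M0 p m = (1%:M + m *: P) *m Z.
  by move=> m; rewrite /M0 mulmxDl mul1mx -scalemxAl.
have hAM : A *m M0 p mu = M0 p mu *m A.
  by rewrite /A (mpow_comm k.-1 (erefl (M0 p mu *m M0 p mu))).
have hBM : B *m M0 p eta = M0 p eta *m B.
  by rewrite /B (mpow_comm l.-1 (erefl (M0 p eta *m M0 p eta))).
rewrite stepC; first last.
- by rewrite -mulmxA -hM0 hBM hM0.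
- by rewrite -mulmxA -hM0 hAM hM0.
- exact: commQR.
have [e|ne] := eqVneq mu eta.
- subst eta.
  rewrite stepD_eq ?mulr0 //.
  + by rewrite -hM0.
  + by rewrite -hM0.
  + by rewrite /B (mpow_comm l.-1 hAM).
rewrite (stepDfin (mu := mu) (nu := eta)) ?mulr0 //.
- by rewrite -hM0.
- by rewrite -hM0.
rewrite mulmxDl mulmxDl !mul1mx -!scalemxAl !scalerDr !scalerA mulrC scalerBl.
by rewrite opprD addrACA subrr addr0.
Qed.

End P8.


Theorem mainTheorem17 (R : numClosedFieldType) (n d : nat) (q : R)
  (hn : (0 < n)%N) (hd : (0 < d)%N) (hq0 : q != 0) (hq : not_root_of_unity q)
  (X Z : 'M[R]_n) (V : 'I_d -> 'rV[R]_n) (W : 'I_d -> 'cV[R]_n) :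
  inMx q X Z V W ->
  forall (mu eta : R) (k l : nat),
    PB (trZpow mu%:P k) (trZpow eta%:P l) (pt_of X Z V W) = 0.
Proof.
move=> _ mu eta k l; exact: main_gen.
Qed.
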